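(* For any $(n,t_e,\lambda)$-full-access setting satisfying $2n-t_e\le 2^{\lambda}$, there is a P-PMT family (obtained by repeating a one-round polynomial ramp-secret-sharing-based protocol $q$ times, $q\in\mathbb N$ arbitrary) with P-secrecy rate $1-\frac{t_e}{n}$.
   Context: Multipath setting: an $(n,t_a,t_b,t_e,\lambda)$-multipath setting ($0\le t_a,t_b,t_e\le n$) has a sender Alice, a receiver Bob and a passive, computationally unbounded eavesdropper Eve, connected by $n$ disjoint paths; Alice and Bob share no key. At any time Alice, Bob and Eve access at most $t_a,t_b,t_e$ paths respectively. Time is divided into intervals, each corresponding to sending $\lambda$ consecutive bits over a path; at the start of each interval every party (Eve included, adaptively) chooses its accessed paths and keeps them for the whole interval. Anything sent over a path is seen by all parties accessing that path in that interval; Eve's view is everything sent over her accessed paths. The case $t_a=t_b=n$ is called the $(n,t_e,\lambda)$-full-access setting. PMT protocol: a $(k,c,\delta,\epsilon)$-PMT protocol transmits any $S\in\{0,1\}^k$ from Alice to Bob with $c$ communicated bits, Bob outputting $\hat S$, with $\Pr(\hat S\neq s)\le\delta$ for all $s$ and $SD(View_E(s_1),View_E(s_2))\le\epsilon$ for all $s_1,s_2$ ($View_E(s)$ Eve's view when $s$ is sent, any Eve strategy; $SD(X,Y)=\frac12\sum_x|\Pr(X=x)-\Pr(Y=x)|$). P-PMT family: a sequence $(\Pi_i)_{i\in\mathbb N}$ of $(k_i,c_i,0,0)$-PMT protocols with $k_{i+1}>k_i$; its P-secrecy rate is $\inf_i k_i/c_i$. *)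

(* Defs.v *)
(* Model of PMT protocols in the (n, t_e, lambda)-full-access
   multipath setting (t_a = t_b = n). *)
From HB Require Import structures.
From mathcomp Require Import all_boot all_order all_algebra.
Set Implicit Arguments. Unset Strict Implicit. Unset Printing Implicit Defensive.
Import Order.TTheory GRing.Theory Num.Theory.
Local Open Scope ring_scope.

(* lambda bits sent over one path during one interval *)
Definition block (lambda : nat) : finType := lambda.-tuple bool.

(* the full transcript: for each interval j < r and each path i < n,
   the lambda-bit block sent over path i during interval j *)
Definition transcript (n lambda r : nat) : finType :=
  {ffun 'I_r -> {ffun 'I_n -> block lambda}}.

(* what Eve observes in one interval: Some b on an accessed path, None otherwise *)
Definition obs (n lambda : nat) : finType := {ffun 'I_n -> option (block lambda)}.
Definition eview (n lambda r : nat) : finType := {ffun 'I_r -> obs n lambda}.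

(* A protocol for the full-access setting with n paths and interval length lambda:
   r intervals, Alice's randomness uniform over the finite type p_Omega,
   Alice sends over all n paths in every interval; Bob decodes the transcript. *)
Record protocol (n lambda : nat) := Protocol {
  p_k : nat;
  p_r : nat;
  p_Omega : finType;
  p_enc : p_k.-tuple bool -> p_Omega -> transcript n lambda p_r;
  p_dec : transcript n lambda p_r -> p_k.-tuple bool }.

Definition p_c n lambda (P : protocol n lambda) : nat := (p_r P * n * lambda)%N.

(* An adaptive (possibly randomized, coins uniform over e_Theta) eavesdropper
   accessing at most t_e paths per interval; at the start of interval j she
   chooses her paths as a function of her coins and of her view of the
   previous intervals (later intervals are blanked out, see view_upto). *)
Record eve (n lambda r t_e : nat) := Eve {
  e_Theta : finType;
  e_choose : e_Theta -> 'I_r -> eview n lambda r -> {set 'I_n};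
  e_bound : forall th j v, (#|e_choose th j v| <= t_e)%N }.

Definition observe n lambda (A : {set 'I_n}) (x : {ffun 'I_n -> block lambda})
  : obs n lambda := [ffun i => if i \in A then Some (x i) else None].

Definition empty_view n lambda r : eview n lambda r := [ffun _ => [ffun _ => None]].

Fixpoint view_upto n lambda r (Th : finType)
    (ch : Th -> 'I_r -> eview n lambda r -> {set 'I_n}) (th : Th)
    (tr : transcript n lambda r) (m : nat) : eview n lambda r :=
  match m with
  | 0 => empty_view n lambda r
  | m'.+1 =>
      let v := view_upto ch th tr m' in
      [ffun j : 'I_r => if (j == m' :> nat) then observe (ch th j v) (tr j) else v j]
  end.

Definition eve_view n lambda r t_e (E : eve n lambda r t_e) (th : e_Theta E)
  (tr : transcript n lambda r) : eview n lambda r :=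
  view_upto (@e_choose _ _ _ _ E) th tr r.

Definition view_dist n lambda t_e (P : protocol n lambda) (E : eve n lambda (p_r P) t_e)
  (s : (p_k P).-tuple bool) (v : eview n lambda (p_r P)) : rat :=
  (#|[pred x : (p_Omega P * e_Theta E)%type | eve_view x.2 (p_enc s x.1) == v]|%:R
     / #|{: (p_Omega P * e_Theta E)%type}|%:R).

Definition SD (T : finType) (X Y : T -> rat) : rat :=
  2^-1 * \sum_(x : T) `|X x - Y x|.

Definition err_prob n lambda (P : protocol n lambda) (s : (p_k P).-tuple bool) : rat :=
  #|[pred w : p_Omega P | @p_dec _ _ P (p_enc s w) != s]|%:R / #|{: p_Omega P}|%:R.

Definition is_PMT n lambda t_e (P : protocol n lambda) (delta eps : rat) : Prop :=
  (0 < #|{: p_Omega P}|)%N /\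
  (forall s : (p_k P).-tuple bool, @err_prob _ _ P s <= delta) /\
  (forall (E : eve n lambda (p_r P) t_e) (s1 s2 : (p_k P).-tuple bool),
      SD (view_dist E s1) (view_dist E s2) <= eps).

Definition P_PMT_family n lambda t_e (F : nat -> protocol n lambda) : Prop :=
  (forall i, is_PMT t_e (F i) 0 0) /\ (forall i, (p_k (F i) < p_k (F i.+1))%N).

Definition ratio n lambda (P : protocol n lambda) : rat := (p_k P)%:R / (p_c P)%:R.

(* the P-secrecy rate inf_i k_i / c_i equals rho (greatest lower bound) *)
Definition P_secrecy_rate_is n lambda (F : nat -> protocol n lambda) (rho : rat) : Prop :=
  (forall i, rho <= ratio (F i)) /\
  (forall e : rat, 0 < e -> exists i, ratio (F i) < rho + e).

(* Main.v *)
From Pilot Require Import Defs.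
From mathcomp Require Import all_boot all_order all_algebra all_field.
From mathcomp Require Import zify ring.
Set Implicit Arguments. Unset Strict Implicit. Unset Printing Implicit Defensive.
Import Order.TTheory GRing.Theory Num.Theory.
Local Open Scope ring_scope.

Definition fbij (T U : finType) (H : #|T| = #|U|) (x : T) : U :=
  enum_val (cast_ord H (enum_rank x)).

Lemma fbijK (T U : finType) (H : #|T| = #|U|) :
  cancel (fbij H) (fbij (esym H)).
Proof.
by move=> x; rewrite /fbij enum_valK cast_ordK enum_rankK.
Qed.

Definition trunc n lambda r (m : nat) (v : eview n lambda r) : eview n lambda r :=
  [ffun j : 'I_r => if (j < m)%N then v j else [ffun _ => None]].

Lemma view_upto_hi n lambda r (Th : finType)
    (ch : Th -> 'I_r -> eview n lambda r -> {set 'I_n}) th tr m (j : 'I_r) :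
  (m <= j)%N -> view_upto ch th tr m j = [ffun _ => None].
Proof.
elim: m => [|m IH] hm /=; first by rewrite ffunE.
rewrite ffunE ifN; first by apply: IH; apply: ltnW.
by apply/eqP => E; rewrite E ltnn in hm.
Qed.

Lemma view_upto_char n lambda r (Th : finType)
    (ch : Th -> 'I_r -> eview n lambda r -> {set 'I_n}) th tr m v :
  view_upto ch th tr m = trunc m v <->
  (forall j : 'I_r, (j < m)%N -> observe (ch th j (trunc j v)) (tr j) = v j).
Proof.
elim: m => [|m IH] /=.
  split=> // _; apply/ffunP => j; by rewrite !ffunE.
split.
- move=> E.
  have E1 : view_upto ch th tr m = trunc m v.
    apply/ffunP => j; rewrite [RHS]ffunE.
    case: ltnP => hj.
    + move/ffunP: E => /(_ j); rewrite !ffunE ifN; last by rewrite neq_ltn hj.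
      by rewrite ltnS ltnW.
    + by rewrite view_upto_hi.
  move=> j hj; rewrite ltnS leq_eqVlt in hj; case/orP: hj => hj.
  + by move/eqP: hj => hj; move/ffunP: E => /(_ j); rewrite !ffunE hj eqxx ltnSn -E1.
  + by move/IH: E1; apply.
- move=> H.
  have E1 : view_upto ch th tr m = trunc m v.
    by apply/IH => j hj; apply: H; apply: ltnW.
  apply/ffunP => j; rewrite !ffunE E1.
  case: eqP => hj.
  + by have := H j; rewrite hj ltnSn => /(_ isT) <-.
  + have -> : (j < m.+1)%N = (j < m)%N.
      by rewrite ltnS leq_eqVlt (negbTE (introN eqP hj)).
    by rewrite ffunE.
Qed.

Lemma eve_view_char n lambda r t_e (E : eve n lambda r t_e) th tr v :
  eve_view (E:=E) th tr = v <->
  (forall j : 'I_r, observe (e_choose th j (trunc j v)) (tr j) = v j).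
Proof.
have Tv : trunc r v = v by apply/ffunP => j; rewrite ffunE ltn_ord.
rewrite /eve_view; split=> [H j | H].
  have : view_upto (e_choose (e:=E)) th tr r = trunc r v by rewrite Tv.
  by move/view_upto_char => /(_ j (ltn_ord j)).
rewrite -Tv; apply/view_upto_char => j _; exact: H.
Qed.
Definition fn (F : fieldType) k (f : {ffun 'I_k -> F}) (i : nat) : F :=
  if insub i is Some o then f o else 0.

Lemma fn_val (F : fieldType) k (f : {ffun 'I_k -> F}) (i : 'I_k) : fn f i = f i.
Proof. by rewrite /fn valK. Qed.

Lemma fn_lt (F : fieldType) k (f : {ffun 'I_k -> F}) i (H : (i < k)%N) :
  fn f i = f (Ordinal H).
Proof. by rewrite /fn insubT. Qed.

Lemma fnD (F : fieldType) k (f g : {ffun 'I_k -> F}) i : fn (f + g) i = fn f i + fn g i.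
Proof. by rewrite /fn; case: insub => [o|]; rewrite ?ffunE ?addr0. Qed.

Definition rpoly (F : fieldType) k (f : {ffun 'I_k -> F}) : {poly F} := \poly_(i < k) fn f i.

Definition Ppoly (F : fieldType) te m (w : {ffun 'I_te -> F}) (s : {ffun 'I_m -> F}) :=
  rpoly w + rpoly s * 'X^te.

Lemma size_rpoly (F : fieldType) k (f : {ffun 'I_k -> F}) : (size (rpoly f) <= k)%N.
Proof. exact: size_poly. Qed.

Lemma rpolyD (F : fieldType) k (f g : {ffun 'I_k -> F}) : rpoly (f + g) = rpoly f + rpoly g.
Proof. by apply/polyP => i; rewrite coefD !coef_poly fnD; case: ifP; rewrite ?addr0. Qed.

Lemma coef_Ppoly (F : fieldType) te m (w : {ffun 'I_te -> F}) (s : {ffun 'I_m -> F}) (i : 'I_m) :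
  (Ppoly w s)`_(te + i) = s i.
Proof.
rewrite /Ppoly coefD coefMXn coef_poly ltnNge leq_addr /= add0r addKn.
by rewrite coef_poly ltn_ord fn_val.
Qed.

Lemma size_Ppoly (F : fieldType) te m (w : {ffun 'I_te -> F}) (s : {ffun 'I_m -> F}) :
  (size (Ppoly w s) <= te + m)%N.
Proof.
rewrite /Ppoly; apply: leq_trans (size_polyD _ _) _; rewrite geq_max; apply/andP; split.
  exact: leq_trans (size_rpoly _) (leq_addr _ _).
have [->|nz] := eqVneq (rpoly s) 0; first by rewrite mul0r size_poly0.
by rewrite size_mulXn // leq_add2l size_rpoly.
Qed.

Lemma Ppoly_inj (F : fieldType) n te m (a : 'I_n -> F) (w w' : {ffun 'I_te -> F})
   (s s' : {ffun 'I_m -> F}) :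
  (te + m <= n)%N -> injective a ->
  (forall i, (Ppoly w s).[a i] = (Ppoly w' s').[a i]) -> s = s'.
Proof.
move=> hn ia H.
have d0 : Ppoly w s - Ppoly w' s' = 0.
  apply/eqP; apply: contraT => nz.
  have := max_poly_roots nz (rs := [seq a i | i <- enum 'I_n]).
  rewrite map_inj_uniq // enum_uniq size_map size_enum_ord.
  have -> : all (root (Ppoly w s - Ppoly w' s')) [seq a i | i <- enum 'I_n].
    by apply/allP => x /mapP [i _ ->]; rewrite /root hornerD hornerN H subrr.
  move=> /(_ isT isT) lt; move: (leq_trans lt (size_polyD _ _)).
  rewrite size_polyN leq_max => /orP[] h.
    by move: (leq_trans (leq_trans h (size_Ppoly _ _)) hn); rewrite ltnn.
  by move: (leq_trans (leq_trans h (size_Ppoly _ _)) hn); rewrite ltnn.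
apply/ffunP => i; rewrite -(coef_Ppoly w s) -(coef_Ppoly w' s').
by move/eqP: d0; rewrite subr_eq0 => /eqP ->.
Qed.

Definition Qpoly (F : fieldType) n (a : 'I_n -> F) (A : {set 'I_n}) : {poly F} :=
  \prod_(x <- [seq a i | i <- enum A]) ('X - x%:P).

Definition delta (F : fieldType) n te m (a : 'I_n -> F) (A : {set 'I_n})
   (s1 s2 : {ffun 'I_m -> F}) : {ffun 'I_te -> F} :=
  [ffun k : 'I_te => ((rpoly s1 * 'X^te - rpoly s2 * 'X^te) %% Qpoly a A)`_k].

Lemma delta_ok (F : fieldType) n te m (a : 'I_n -> F) (A : {set 'I_n})
   (s1 s2 : {ffun 'I_m -> F}) (w : {ffun 'I_te -> F}) i :
  (#|A| <= te)%N -> i \in A ->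
  (Ppoly (w + delta te a A s1 s2) s2).[a i] = (Ppoly w s1).[a i].
Proof.
move=> hA iA.
set d := rpoly s1 * 'X^te - rpoly s2 * 'X^te.
set e := d %% Qpoly a A.
have Qn0 : Qpoly a A != 0.
  by rewrite -size_poly_eq0 size_prod_XsubC.
have se : (size e <= te)%N.
  have := ltn_modp d (Qpoly a A); rewrite Qn0 size_prod_XsubC size_map -cardE ltnS.
  by move=> h; apply: leq_trans h hA.
have re : rpoly (delta te a A s1 s2) = e.
  apply/polyP => k; rewrite coef_poly; case: ltnP => hk.
    by rewrite (fn_lt _ hk) ffunE.
  by rewrite nth_default // (leq_trans se hk).
have Qr : (Qpoly a A).[a i] = 0.
  apply/eqP; rewrite -/(root _ _) root_prod_XsubC; apply: map_f.
  by rewrite mem_enum.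
have ee : e.[a i] = d.[a i].
  by rewrite {1}(divp_eq d (Qpoly a A)) hornerD hornerM Qr mulr0 add0r.
rewrite /Ppoly rpolyD re !hornerD ee /d hornerD hornerN.
by rewrite addrC addrA addrC !addrA subrK addrC.
Qed.

Definition Om (F : finFieldType) q te := {ffun 'I_q -> {ffun 'I_te -> F}}.
Definition Mt (F : finFieldType) q m := {ffun 'I_q -> {ffun 'I_m -> F}}.

Definition encM (F : finFieldType) n te m lambda q (g : F -> block lambda) (a : 'I_n -> F)
  (s : Mt F q m) (w : Om F q te) : transcript n lambda q :=
  [ffun j => [ffun i => g (Ppoly (w j) (s j)).[a i]]].

Definition decM (F : finFieldType) n te m lambda q (g : F -> block lambda) (a : 'I_n -> F)
  (s0 : Mt F q m) (tr : transcript n lambda q) : Mt F q m :=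
  if [pick x : (Mt F q m * Om F q te)%type | encM g a x.1 x.2 == tr] is Some x
  then x.1 else s0.

Lemma decM_ok (F : finFieldType) n te m lambda q (g : F -> block lambda) (a : 'I_n -> F)
  (s0 s : Mt F q m) (w : Om F q te) : (te + m <= n)%N -> injective a -> injective g ->
  decM te g a s0 (encM g a s w) = s.
Proof.
move=> hn ia ig; rewrite /decM; case: pickP => [[s' w'] /= /eqP E|].
  apply/ffunP => j; apply: (Ppoly_inj (w := w' j) (w' := w j)) hn ia _ => i.
  by apply: ig; move/ffunP: E => /(_ j); rewrite !ffunE => /ffunP /(_ i); rewrite !ffunE.
by move=> /(_ (s, w)); rewrite /= eqxx.
Qed.

Lemma secrecy (F : finFieldType) n te m lambda q (g : F -> block lambda) (a : 'I_n -> F)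
  (E : eve n lambda q te) (s1 s2 : Mt F q m) (v : eview n lambda q) :
  #|[pred x : (Om F q te * e_Theta E)%type | eve_view x.2 (encM g a s1 x.1) == v]| =
  #|[pred x : (Om F q te * e_Theta E)%type | eve_view x.2 (encM g a s2 x.1) == v]|.
Proof.
pose Dl (th : e_Theta E) : Om F q te :=
  [ffun j => delta te a (e_choose th j (trunc j v)) (s1 j) (s2 j)].
pose f (x : (Om F q te * e_Theta E)%type) := (x.1 + Dl x.2, x.2).
have fi : injective f.
  by move=> [w th] [w' th'] [] /= Ew Et; subst th'; rewrite (addIr _ Ew).
pose S2 := [set x : (Om F q te * e_Theta E)%type | eve_view x.2 (encM g a s2 x.1) == v].
have key : forall x, (x \in f @^-1: S2) = (eve_view x.2 (encM g a s1 x.1) == v).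
  move=> [w th]; rewrite !inE /=.
  have Ob : forall j : 'I_q,
      observe (e_choose th j (trunc j v)) (encM g a s2 (w + Dl th) j) =
      observe (e_choose th j (trunc j v)) (encM g a s1 w j).
    move=> j; apply/ffunP => i; rewrite !ffunE; case: ifP => // iA.
    rewrite delta_ok //; exact: e_bound.
  apply/eqP/eqP => /eve_view_char H; apply/eve_view_char => j.
    by rewrite -Ob.
  by rewrite Ob.
transitivity #|f @^-1: S2|.
  by apply: eq_card => x; rewrite key.
by rewrite card_preimset //; apply: eq_card => x; rewrite inE.
Qed.

Lemma cardMt (F : finFieldType) lambda q m : #|F| = (2 ^ lambda)%N ->
  #|{: (q * lambda * m).-tuple bool}| = #|Mt F q m|.
Proof.
move=> HF; rewrite card_tuple card_bool /Mt !card_ffun !card_ord HF.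
rewrite -!expnM; have -> : (q * lambda * m = lambda * (m * q))%N by lia. by [].
Qed.

Definition proto (F : finFieldType) n te lambda (HFB : #|F| = #|block lambda|)
  (HF : #|F| = (2 ^ lambda)%N) (a : 'I_n -> F) (q : nat) : protocol n lambda :=
  @Protocol n lambda (q * lambda * (n - te)) q (Om F q te)
    (fun s w => encM (fbij HFB) a (fbij (cardMt q (n - te) HF) s) w)
    (fun tr => fbij (esym (cardMt q (n - te) HF)) (decM te (fbij HFB) a 0 tr)).

Lemma proto_PMT (F : finFieldType) n te lambda (HFB : #|F| = #|block lambda|)
  (HF : #|F| = (2 ^ lambda)%N) (a : 'I_n -> F) (q : nat) :
  (te <= n)%N -> injective a -> is_PMT te (proto te HFB HF a q) 0 0.
Proof.
move=> hte ia; split; [|split].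
- by apply/card_gt0P; exists 0.
- move=> s; rewrite /err_prob.
  have -> : #|[pred w : p_Omega (proto te HFB HF a q) |
      p_dec (p_enc s w) != s]| = 0%N.
    apply: eq_card0 => w /=; rewrite inE /=; rewrite decM_ok ?subnKC //; last exact: can_inj (fbijK HFB).
    by rewrite fbijK eqxx.
  by rewrite mul0r.
- move=> E s1 s2; rewrite /SD big1 ?mulr0 // => v _.
  rewrite /view_dist /= (secrecy _ _ _ _ (fbij (cardMt q (n - te) HF) s2)).
  by rewrite subrr normr0.
Qed.

Lemma proto_ratio (F : finFieldType) n te lambda (HFB : #|F| = #|block lambda|)
  (HF : #|F| = (2 ^ lambda)%N) (a : 'I_n -> F) (q : nat) :
  (te < n)%N -> (0 < lambda)%N -> (0 < q)%N ->
  Pilot.Defs.ratio (proto te HFB HF a q) = 1 - (te%:R / n%:R : rat).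
Proof.
move=> hte hl hq; rewrite /Pilot.Defs.ratio /p_c /=.
have n0 : (n%:R : rat) != 0 by rewrite pnatr_eq0 -lt0n (leq_ltn_trans _ hte).
have l0 : (lambda%:R : rat) != 0 by rewrite pnatr_eq0 -lt0n.
have q0 : (q%:R : rat) != 0 by rewrite pnatr_eq0 -lt0n.
rewrite !natrM natrB ?(ltnW hte) //.
by field; rewrite n0 l0 q0.
Qed.

Theorem proposition1 (n t_e lambda : nat) :
  (t_e < n)%N -> (2 * n - t_e <= 2 ^ lambda)%N ->
  exists F : nat -> protocol n lambda,
    P_PMT_family t_e F /\ P_secrecy_rate_is F (1 - (t_e%:R / n%:R : rat)).
Proof.
move=> hte hl.
have hn : (n <= 2 ^ lambda)%N by lia.
have l0 : (0 < lambda)%N.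
  rewrite lt0n; apply/eqP => l0; move: hl; rewrite l0 expn0; lia.
have [Fd _ HF] := pPrimePowerField (isT : prime 2) l0.
have HFB : #|Fd| = #|{: block lambda}| by rewrite HF card_tuple card_bool.
have hnF : (n <= #|Fd|)%N by rewrite HF.
pose a (i : 'I_n) : Fd := enum_val (widen_ord hnF i).
have ia : injective a.
  move=> i j /enum_val_inj /(congr1 val) /= h; exact: val_inj.
exists (fun i => proto t_e HFB HF a i.+1); split; [split|split].
- by move=> i; apply: proto_PMT => //; apply: ltnW.
- move=> i /=; rewrite ltn_pmul2r ?ltn_pmul2r //.
  by rewrite subn_gt0.
- by move=> i; rewrite proto_ratio.
- move=> e e0; exists 0%N; rewrite proto_ratio //.
  by rewrite ltrDl.
Qed.
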